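(* Let $\mathcal{X}$ be the graph obtained from the icosahedron graph (the 1-skeleton of the regular icosahedron; 12 vertices, 5-regular, planar) by deleting one edge $\{a,b\}$. Then the maximum size of an independent set of $\mathcal{X}$ is $4$, and both $a$ and $b$ belong to every maximum independent set of $\mathcal{X}$.
   Context: An independent set is a set of pairwise non-adjacent vertices; a maximum independent set is one of largest possible size. *)

(* Defs.v *)
From mathcomp Require Import all_boot.
Set Implicit Arguments. Unset Strict Implicit. Unset Printing Implicit Defensive.

(* Icosahedron graph on vertices 0..11:
   0 = top, 1..5 = upper pentagon, 6..10 = lower pentagon, 11 = bottom.
   upper i (1<=i<=5) is adjacent to lower 5+i and lower 5+(i mod 5)+1. *)
Definition ico_edge_nat (u v : nat) : bool :=
  [|| (u == 0) && (1 <= v <= 5),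
      (1 <= u <= 5) && (1 <= v <= 5) && ((v == (u %% 5).+1)),
      (6 <= u <= 10) && (6 <= v <= 10) && ((v - 6) == (u - 6).+1 %% 5),
      (1 <= u <= 5) && ((v == 5 + u) || (v == 5 + (u %% 5).+1))
    | (6 <= u <= 10) && (v == 11)].

Definition ico_adj : rel 'I_12 :=
  fun u v => ico_edge_nat u v || ico_edge_nat v u.

Definition del_edge (T : finType) (e : rel T) (a b : T) : rel T :=
  fun u v => e u v && ~~ ((u == a) && (v == b) || (u == b) && (v == a)).

Definition independent (T : finType) (e : rel T) (S : {set T}) : bool :=
  [forall u in S, forall v in S, ~~ e u v].

Definition alpha (T : finType) (e : rel T) : nat :=
  \max_(S : {set T} | independent e S) #|S|.

Definition maximum_independent (T : finType) (e : rel T) (S : {set T}) : bool :=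
  independent e S && (#|S| == alpha e).

(* Main.v *)
Require Import Defs.
From mathcomp Require Import all_boot.
Lemma card_set (f : nat -> bool) :
  #|[set i : 'I_12 | f (val i)]| = size [seq n <- iota 0 12 | f n].
Proof.
rewrite cardsE cardE /enum_mem -enumT -val_enum_ord filter_map size_map.
by congr size; apply: eq_filter => i; rewrite unfold_in inE.
Qed.

Definition Enat (a b u v : nat) : bool :=
  (ico_edge_nat u v || ico_edge_nat v u) &&
  ~~ ((u == a) && (v == b) || (u == b) && (v == a)).

Lemma EnatE (a b x y : 'I_12) : del_edge ico_adj a b x y = Enat a b x y.
Proof. by []. Qed.

Definition members (m : seq bool) := [seq n <- iota 0 12 | nth false m n].
Definition indepb a b (s : seq nat) := all (fun u => all (fun v => ~~ Enat a b u v) s) s.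

Definition Q a b m :=
  let s := members m in indepb a b s ==> (size s <= 4) && ((size s == 4) ==> nth false m a && nth false m b).

Fixpoint allb n (P : seq bool -> bool) : bool :=
  if n is n'.+1 then allb n' (fun l => P (true :: l)) && allb n' (fun l => P (false :: l)) else P [::].
Fixpoint hasb n (P : seq bool -> bool) : bool :=
  if n is n'.+1 then hasb n' (fun l => P (true :: l)) || hasb n' (fun l => P (false :: l)) else P [::].

Lemma allbP n P : allb n P -> forall l, size l = n -> P l.
Proof.
elim: n P => [|n IH] P /=; first by move=> H [|//].
move=> /andP[H1 H2] [|[] l] //= [Hl]; [exact: (IH _ H1) | exact: (IH _ H2)].
Qed.
Lemma hasbP n P : hasb n P -> exists l, P l.
Proof.
elim: n P => [|n IH] P /=; first by exists [::].
by case/orP => /IH [l Hl]; eexists; exact Hl.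
Qed.

Definition adjn a b := ico_edge_nat a b || ico_edge_nat b a.



Fixpoint allp n (pre : seq bool) (bad P : seq bool -> bool) : bool :=
  if bad pre then true else
  if n is n'.+1 then allp n' (rcons pre true) bad P && allp n' (rcons pre false) bad P
  else P pre.
Fixpoint hasp n (pre : seq bool) (bad P : seq bool -> bool) : bool :=
  if bad pre then false else
  if n is n'.+1 then hasp n' (rcons pre true) bad P || hasp n' (rcons pre false) bad P
  else P pre.

Lemma allpP (bad P : seq bool -> bool) (Hbad : forall p s, bad p -> P (p ++ s)) n pre :
  allp n pre bad P -> forall s, size s = n -> P (pre ++ s).
Proof.
elim: n pre => [|n IH] pre /=; case: ifP => [hb _ s _|hb]; try exact: Hbad.
  by move=> Hp [|//]; rewrite cats0.
move=> /andP[H1 H2] [|[] s] //= [Hs]; rewrite -cat_rcons.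
  exact: IH H1 _ Hs.
exact: IH H2 _ Hs.
Qed.

Lemma haspP (bad P : seq bool -> bool) n pre : hasp n pre bad P -> exists s, P (pre ++ s).
Proof.
elim: n pre => [|n IH] pre /=; case: ifP => // hb.
  by move=> Hp; exists [::]; rewrite cats0.
case/orP => /IH [s Hs]; [exists (true :: s) | exists (false :: s)]; by rewrite -cat_rcons.
Qed.

Definition bad a b p := ~~ indepb a b (members p).

Lemma indepb_sub a b s1 s2 : {subset s1 <= s2} -> indepb a b s2 -> indepb a b s1.
Proof.
move=> sub /allP H; apply/allP => u /sub /H /allP H2; apply/allP => v /sub; exact: H2.
Qed.

Lemma members_cat p s : {subset members p <= members (p ++ s)}.
Proof.
move=> n; rewrite !mem_filter => /andP[hn ->]; rewrite andbT.
have hp : n < size p by rewrite ltnNge; apply: contraL hn => h; rewrite nth_default.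
by rewrite nth_cat hp.
Qed.

Lemma Hbad a b p s : bad a b p -> Q a b (p ++ s).
Proof.
rewrite /bad /Q => H; apply/implyP => H2; case/negP: H.
exact: indepb_sub (members_cat p s) H2.
Qed.

Definition bigcheck :=
  all (fun a => all (fun b => adjn a b ==>
     (allp 12 [::] (bad a b) (Q a b) && hasp 12 [::] (bad a b) (fun m => indepb a b (members m) && (size (members m) == 4))))
     (iota 0 12)) (iota 0 12).

Lemma bigcheck_ok : bigcheck.
Proof. (vm_cast_no_check (erefl true)). Qed.
Definition setS (m : seq bool) : {set 'I_12} := [set i : 'I_12 | nth false m (val i)].

Lemma setS_eq (S : {set 'I_12}) :
  S = setS (mkseq (fun n => inord n \in S) 12).
Proof.
apply/setP => i; rewrite inE nth_mkseq ?ltn_ord //.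
by congr (_ \in S); apply/val_inj; rewrite /= inordK.
Qed.

Lemma mem_members m n : (n \in members m) = (n < 12) && nth false m n.
Proof. by rewrite mem_filter mem_iota add0n andbC. Qed.

Lemma indep_iff (a b : 'I_12) m :
  independent (del_edge ico_adj a b) (setS m) = indepb a b (members m).
Proof.
apply/idP/idP.
- move=> /forallP H. apply/allP => u; rewrite mem_members => /andP[hu mu].
  apply/allP => v; rewrite mem_members => /andP[hv mv].
  have := H (inord u). rewrite inE /= inordK // mu => /forallP /(_ (inord v)).
  by rewrite inE /= inordK // mv /= EnatE !inordK.
- move=> /allP H. apply/forallP => u; apply/implyP; rewrite inE => mu.
  apply/forallP => v; apply/implyP; rewrite inE => mv.
  rewrite EnatE.
  have /allP : all (fun v => ~~ Enat a b u v) (members m).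
    by apply: H; rewrite mem_members ltn_ord mu.
  by apply; rewrite mem_members ltn_ord mv.
Qed.

Lemma card_setS m : #|setS m| = size (members m).
Proof. exact: (card_set (nth false m)). Qed.

Theorem lemma3 (a b : 'I_12) :
  ico_adj a b ->
  alpha (del_edge ico_adj a b) = 4 /\
  (forall S : {set 'I_12},
     maximum_independent (del_edge ico_adj a b) S -> a \in S /\ b \in S).
Proof.
move=> hab.
have := bigcheck_ok; rewrite /bigcheck.
move=> /allP /(_ (val a)); rewrite mem_iota ltn_ord => /(_ isT).
move=> /allP /(_ (val b)); rewrite mem_iota ltn_ord => /(_ isT).
move=> /implyP /(_ hab) /andP [HA HE].
have HQ : forall S, independent (del_edge ico_adj a b) S ->
   (#|S| <= 4) && ((#|S| == 4) ==> (a \in S) && (b \in S)).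
  move=> S. rewrite (setS_eq S) indep_iff card_setS !inE.
  move: (mkseq _ _) (size_mkseq (fun n => inord n \in S) 12) => m Hm.
  have := @allpP _ _ (@Hbad a b) _ _ HA m Hm. by rewrite /Q cat0s /= => /implyP.
have Halpha : alpha (del_edge ico_adj a b) = 4.
  apply/eqP; rewrite eqn_leq; apply/andP; split.
    by apply/bigmax_leqP => S /HQ /andP[].
  have [m /andP[H1 /eqP H2]] := @haspP _ _ _ _ HE.
  rewrite -[X in X <= _]H2 -card_setS; apply: leq_bigmax_cond; by rewrite indep_iff.
split => // S /andP[HS]; rewrite Halpha => Hc.
by have := HQ S HS; rewrite Hc => /andP[_ /andP[-> ->]].
Qed.
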